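(* Let $(B,\beta)$ be a quadratik ring, $(\mathcal E,X)$ a weakly cofull right functional $(B,\beta)$-module, and $(\mathcal F,Y)$ a cofull right functional $\mathcal K_B\big((\mathcal E\oplus B,X\oplus\beta)\big)$-module. Let $M_B\subseteq\mathcal K_B(\mathcal E\oplus B)$ be the subring of corner multiplication operators $m_b$, $m_b(\eta\oplus d)=0\oplus bd$ ($b,d\in B,\eta\in\mathcal E$), and let $\mathcal FM_B$ be the additive subgroup of $\mathcal F$ formed by the elements $\xi m_b$ ($\xi\in\mathcal F$, $m_b\in M_B$). Make $\mathcal FM_B$ a right functional $(B,\beta)\cong(M_B,\mathrm{Ad}(\beta))$-module via $\eta\cdot b:=\eta m_b$, with $G$-action the restriction of $Y$ and functional space $\Theta_B(\mathcal FM_B):=\{m\circ\phi|_{\mathcal FM_B}: m\in M_B,\ \phi\in\Theta_{\mathcal K_B(\mathcal E\oplus B)}(\mathcal F)\}$. Then $\mathcal FM_B$ is cofull and there is a ring isomorphism $\pi\colon\mathcal K_{\mathcal K_B(\mathcal E\oplus B)}(\mathcal F)\to\mathcal K_B(\mathcal FM_B)$, $\pi(T)=T|_{\mathcal FM_B}$.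
   Context: $G$ is a discrete group; rings are associative, not necessarily commutative or unital, carry $G$-actions, and are quadratik (every element a finite sum of products $ab$). For a ring $(A,\alpha)$, a right functional $A$-module is a right $A$-module $\mathcal E$ with a $G$-action $S$ by additive bijections satisfying $S_g(\xi a)=S_g(\xi)\alpha_g(a)$, together with a functional space $\Theta_A(\mathcal E)\subseteq\mathrm{Hom}_A(\mathcal E,A)$ which is a left $A$-submodule ($(a\varphi)(\xi)=a\varphi(\xi)$) invariant under $\varphi\mapsto\alpha_g\circ\varphi\circ S_{g^{-1}}$. The compact operators $\mathcal K_A(\mathcal E)$ are the finite sums of $\theta_{\eta,\varphi}(\xi)=\eta\varphi(\xi)$ ($\eta\in\mathcal E,\varphi\in\Theta_A(\mathcal E)$), a ring with $G$-action $T\mapsto S_g\circ T\circ S_{g^{-1}}$. $\mathcal E$ is cofull if every element is a finite sum of elements $\xi\varphi(\eta)$, and weakly cofull if every $\xi\in\mathcal E$ can be written $\xi=\sum_i\eta_ib_i$ with $\eta_i\in\mathcal E$, $b_i\in B$. The ring $B$ is a functional module over itself with functionals the left multiplications by elements of $B$; $\mathcal E\oplus B$ carries the diagonal action and functionals $\xi\oplus b\mapsto\varphi(\xi)+\psi(b)$. *)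

(* Defs.v *)
From Stdlib Require Import List.
Import ListNotations.
Set Implicit Arguments.
Unset Strict Implicit.

Record group := Group {
  gcar :> Type;
  gmul : gcar -> gcar -> gcar;
  ginv : gcar -> gcar;
  gone : gcar;
  gmulA : forall x y z, gmul x (gmul y z) = gmul (gmul x y) z;
  gmul1 : forall x, gmul gone x = x;
  gmulV : forall x, gmul (ginv x) x = gone }.

Record ringD (G : group) := RingD {
  rcar :> Type;
  radd : rcar -> rcar -> rcar;
  ropp : rcar -> rcar;
  rzero : rcar;
  rmul : rcar -> rcar -> rcar;
  ract : G -> rcar -> rcar }.

Definition is_gring G (R : ringD G) : Prop :=
  (forall x y z : R, radd x (radd y z) = radd (radd x y) z) /\
  (forall x y : R, radd x y = radd y x) /\
  (forall x : R, radd (rzero R) x = x) /\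
  (forall x : R, radd (ropp x) x = rzero R) /\
  (forall x y z : R, rmul x (rmul y z) = rmul (rmul x y) z) /\
  (forall x y z : R, rmul x (radd y z) = radd (rmul x y) (rmul x z)) /\
  (forall x y z : R, rmul (radd x y) z = radd (rmul x z) (rmul y z)) /\
  (forall x : R, ract (gone G) x = x) /\
  (forall g h (x : R), ract (gmul g h) x = ract g (ract h x)) /\
  (forall g (x y : R), ract g (radd x y) = radd (ract g x) (ract g y)) /\
  (forall g (x y : R), ract g (rmul x y) = rmul (ract g x) (ract g y)).

Definition rsum {G} (R : ringD G) (l : list R) : R := fold_right (@radd G R) (rzero R) l.
Arguments rsum {G} R l.

Definition quadratik G (R : ringD G) : Prop :=
  forall x : R, exists s : list (R * R),
    x = rsum R (map (fun p => rmul (fst p) (snd p)) s).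

(* Data of a right module with G-action S and functional space Theta. *)
Record modD G (R : ringD G) := ModD {
  mcar :> Type;
  madd : mcar -> mcar -> mcar;
  mopp : mcar -> mcar;
  mzero : mcar;
  msmul : mcar -> R -> mcar;
  mact : G -> mcar -> mcar;
  mfun : (mcar -> R) -> Prop }.

Arguments mfun {G R} m _.
Definition msum {G} {R : ringD G} (M : modD R) (l : list M) : M :=
  fold_right (@madd G R M) (mzero M) l.
Arguments msum {G R} M l.

(* Right functional module, relativised to a subset Min of the carrier of M
   and a subset Rin of the carrier of the coefficient ring (for the usual
   notion take both predicates to be True). *)
Definition is_rfmod G (R : ringD G) (Rin : R -> Prop) (M : modD R) (Min : M -> Prop) : Prop :=
  Min (mzero M) /\
  (forall x y, Min x -> Min y -> Min (madd x y)) /\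
  (forall x, Min x -> Min (mopp x)) /\
  (forall x a, Min x -> Rin a -> Min (msmul x a)) /\
  (forall g x, Min x -> Min (mact g x)) /\
  (forall x y z, Min x -> Min y -> Min z -> madd x (madd y z) = madd (madd x y) z) /\
  (forall x y, Min x -> Min y -> madd x y = madd y x) /\
  (forall x, Min x -> madd (mzero M) x = x) /\
  (forall x, Min x -> madd (mopp x) x = mzero M) /\
  (forall x y a, Min x -> Min y -> Rin a ->
      msmul (madd x y) a = madd (msmul x a) (msmul y a)) /\
  (forall x a b, Min x -> Rin a -> Rin b ->
      msmul x (radd a b) = madd (msmul x a) (msmul x b)) /\
  (forall x a b, Min x -> Rin a -> Rin b ->
      msmul (msmul x a) b = msmul x (rmul a b)) /\
  (forall x, Min x -> mact (gone G) x = x) /\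
  (forall g h x, Min x -> mact (gmul g h) x = mact g (mact h x)) /\
  (forall g x y, Min x -> Min y -> mact g (madd x y) = madd (mact g x) (mact g y)) /\
  (forall g x a, Min x -> Rin a -> mact g (msmul x a) = msmul (mact g x) (ract g a)) /\
  (forall phi, mfun M phi ->
      (forall x, Min x -> Rin (phi x)) /\
      (forall x y, Min x -> Min y -> phi (madd x y) = radd (phi x) (phi y)) /\
      (forall x a, Min x -> Rin a -> phi (msmul x a) = rmul (phi x) a)) /\
  mfun M (fun _ => rzero R) /\
  (forall phi psi, mfun M phi -> mfun M psi -> mfun M (fun x => radd (phi x) (psi x))) /\
  (forall phi, mfun M phi -> mfun M (fun x => ropp (phi x))) /\
  (forall a phi, Rin a -> mfun M phi -> mfun M (fun x => rmul a (phi x))) /\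
  (forall g phi, mfun M phi -> mfun M (fun x => ract g (phi (mact (ginv g) x)))).

Definition compact G (R : ringD G) (M : modD R) (Min : M -> Prop) (T : M -> M) : Prop :=
  exists s : list (mcar M * (mcar M -> R)),
    (forall p, In p s -> Min (fst p) /\ mfun M (snd p)) /\
    forall x, Min x -> T x = msum M (map (fun p => msmul (fst p) (snd p x)) s).

Definition cofull G (R : ringD G) (M : modD R) (Min : M -> Prop) : Prop :=
  forall x, Min x -> exists s : list (mcar M * (mcar M -> R) * mcar M),
    (forall t, In t s -> Min (fst (fst t)) /\ mfun M (snd (fst t)) /\ Min (snd t)) /\
    x = msum M (map (fun t => msmul (fst (fst t)) (snd (fst t) (snd t))) s).

Definition weakly_cofull G (R : ringD G) (M : modD R) : Prop :=
  forall x : M, exists s : list (mcar M * rcar R),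
    x = msum M (map (fun p => msmul (fst p) (snd p)) s).

Definition EBmod G (B : ringD G) (E : modD B) : modD B :=
  @ModD G B (mcar E * rcar B)%type
    (fun p q => (madd (fst p) (fst q), radd (snd p) (snd q)))
    (fun p => (mopp (fst p), ropp (snd p)))
    (mzero E, rzero B)
    (fun p b => (msmul (fst p) b, rmul (snd p) b))
    (fun g p => (mact g (fst p), ract g (snd p)))
    (fun psi => exists (phi : mcar E -> rcar B) (c : rcar B), mfun E phi /\
        psi = (fun p => radd (phi (fst p)) (rmul c (snd p)))).
Arguments EBmod {G B} E.

Definition opRing G (R : ringD G) (M : modD R) : ringD G :=
  @RingD G (mcar M -> mcar M)
    (fun S T x => madd (S x) (T x))
    (fun T x => mopp (T x))
    (fun _ => mzero M)
    (fun S T x => S (T x))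
    (fun g T x => mact g (T (mact (ginv g) x))).
Arguments opRing {G R} M.

(* K_B(E (+) B), as the ambient operator ring; its elements are the
   operators satisfying [compact (EBmod E) (fun _ => True)]. *)
Definition KB G (B : ringD G) (E : modD B) : ringD G := opRing (EBmod E).
Arguments KB {G B} E.

Definition mb G (B : ringD G) (E : modD B) (b : rcar B) : rcar (KB E) :=
  fun p => (mzero E, rmul b (snd p)).
Arguments mb {G B} E b _.

Definition MB G (B : ringD G) (E : modD B) (T : rcar (KB E)) : Prop :=
  exists b, T = mb E b.
Arguments MB {G B} E T.

Definition FMB G (B : ringD G) (E : modD B) (F : modD (KB E)) (x : mcar F) : Prop :=
  exists s : list (mcar F * rcar B),
    x = msum F (map (fun p => msmul (fst p) (mb E (snd p))) s).
Arguments FMB {G B E} F x.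

Definition ThetaFMB G (B : ringD G) (E : modD B) (F : modD (KB E))
    (psi : mcar F -> rcar (KB E)) : Prop :=
  exists s : list (rcar (KB E) * (mcar F -> rcar (KB E))),
    (forall p, In p s -> MB E (fst p) /\ mfun F (snd p)) /\
    forall x, FMB F x -> psi x = rsum (KB E) (map (fun p => rmul (fst p) (snd p x)) s).
Arguments ThetaFMB {G B E} F psi.

Definition FMBmod G (B : ringD G) (E : modD B) (F : modD (KB E)) : modD (KB E) :=
  @ModD G (KB E) (mcar F) (@madd _ _ F) (@mopp _ _ F) (mzero F) (@msmul _ _ F)
    (@mact _ _ F) (@ThetaFMB G B E F).

Arguments FMBmod {G B E} F.
Arguments is_gring {G} R.
Arguments quadratik {G} R.
Arguments is_rfmod {G R} Rin M Min.
Arguments compact {G R} M Min T.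
Arguments cofull {G R} M Min.
Arguments weakly_cofull {G R} M.

(* Main.v *)
Require Import Defs.
From Stdlib Require Import List FunctionalExtensionality.
Import ListNotations.


Definition AG {A : Type} (add : A -> A -> A) (opp : A -> A) (zero : A) : Prop :=
  (forall x y z, add x (add y z) = add (add x y) z) /\
  (forall x y, add x y = add y x) /\
  (forall x, add zero x = x) /\
  (forall x, add (opp x) x = zero).

Definition gsum {A : Type} (add : A -> A -> A) (zero : A) (l : list A) : A :=
  fold_right add zero l.

Lemma ag_A {A} {add : A -> A -> A} {opp zero} (H : AG add opp zero) :
  forall x y z, add x (add y z) = add (add x y) z.
Proof. apply H. Qed.
Lemma ag_C {A} {add : A -> A -> A} {opp zero} (H : AG add opp zero) :
  forall x y, add x y = add y x.
Proof. apply H. Qed.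
Lemma ag_0l {A} {add : A -> A -> A} {opp zero} (H : AG add opp zero) :
  forall x, add zero x = x.
Proof. apply H. Qed.
Lemma ag_Nl {A} {add : A -> A -> A} {opp zero} (H : AG add opp zero) :
  forall x, add (opp x) x = zero.
Proof. apply H. Qed.
Lemma ag_0r {A} {add : A -> A -> A} {opp zero} (H : AG add opp zero) :
  forall x, add x zero = x.
Proof. intros. rewrite (ag_C H). apply (ag_0l H). Qed.
Lemma ag_Nr {A} {add : A -> A -> A} {opp zero} (H : AG add opp zero) :
  forall x, add x (opp x) = zero.
Proof. intros. rewrite (ag_C H). apply (ag_Nl H). Qed.
Lemma ag_cancel {A} {add : A -> A -> A} {opp zero} (H : AG add opp zero) :
  forall a x y, add a x = add a y -> x = y.
Proof.
  intros a x y E.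
  rewrite <- (ag_0l H x), <- (ag_0l H y), <- (ag_Nl H a), <- !(ag_A H), E. reflexivity.
Qed.
Lemma ag_idem {A} {add : A -> A -> A} {opp zero} (H : AG add opp zero) :
  forall x, add x x = x -> x = zero.
Proof.
  intros x E. apply (ag_cancel H x). rewrite E, (ag_0r H). reflexivity.
Qed.
Lemma ag_opp_uniq {A} {add : A -> A -> A} {opp zero} (H : AG add opp zero) :
  forall x y, add y x = zero -> y = opp x.
Proof.
  intros x y E. apply (ag_cancel H x). rewrite (ag_C H x y), E, (ag_Nr H). reflexivity.
Qed.
Lemma ag_swap4 {A} {add : A -> A -> A} {opp zero} (H : AG add opp zero) :
  forall a b c d, add (add a b) (add c d) = add (add a c) (add b d).
Proof.
  intros. rewrite <- !(ag_A H). f_equal. rewrite !(ag_A H). f_equal. apply (ag_C H).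
Qed.
Lemma ag_opp0 {A} {add : A -> A -> A} {opp zero} (H : AG add opp zero) :
  opp zero = zero.
Proof. symmetry. apply (ag_opp_uniq H). apply (ag_0r H). Qed.
Lemma ag_oppD {A} {add : A -> A -> A} {opp zero} (H : AG add opp zero) :
  forall x y, opp (add x y) = add (opp x) (opp y).
Proof.
  intros. symmetry. apply (ag_opp_uniq H).
  rewrite (ag_swap4 H), !(ag_Nl H), (ag_0l H). reflexivity.
Qed.

Lemma sum_app {A} {add : A -> A -> A} {opp zero} (H : AG add opp zero) :
  forall l1 l2, fold_right add zero (l1 ++ l2) = add (fold_right add zero l1) (fold_right add zero l2).
Proof.
  induction l1; intros; simpl. rewrite (ag_0l H); auto.
  rewrite IHl1, (ag_A H). auto.
Qed.
Lemma sum_map_add {A T} {add : A -> A -> A} {opp zero} (H : AG add opp zero) :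
  forall (f g : T -> A) l, fold_right add zero (map (fun t => add (f t) (g t)) l) =
     add (fold_right add zero (map f l)) (fold_right add zero (map g l)).
Proof.
  induction l; simpl. rewrite (ag_0l H); auto.
  rewrite IHl, (ag_swap4 H). auto.
Qed.
Lemma hom_sum {A A'} (add : A -> A -> A) (zero : A) (add' : A' -> A' -> A') (zero' : A')
  (h : A -> A') : (forall x y, h (add x y) = add' (h x) (h y)) -> h zero = zero' ->
  forall l, h (fold_right add zero l) = fold_right add' zero' (map h l).
Proof. intros Hd H0; induction l; simpl; auto. rewrite Hd, IHl; auto. Qed.
Lemma hom_zero {A A'} (add : A -> A -> A) (zero : A) {add' : A' -> A' -> A'} {opp' zero'}
  (H' : AG add' opp' zero') (h : A -> A') : add zero zero = zero ->
  (forall x y, h (add x y) = add' (h x) (h y)) -> h zero = zero'.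
Proof. intros Z Hd. apply (ag_idem H'). rewrite <- Hd, Z. auto. Qed.
Lemma sum_closed {A} (add : A -> A -> A) (zero : A) (P : A -> Prop) :
  P zero -> (forall x y, P x -> P y -> P (add x y)) ->
  forall l, (forall t, In t l -> P t) -> P (fold_right add zero l).
Proof. intros P0 PD; induction l; simpl; auto. Qed.
Lemma sum_map_zero {A T} (add : A -> A -> A) (zero : A) :
  add zero zero = zero -> forall (l : list T), fold_right add zero (map (fun _ => zero) l) = zero.
Proof. intros Z; induction l; simpl; auto. rewrite IHl; auto. Qed.

Lemma B_AG {G} {B : ringD G} (HB : is_gring B) : AG (@radd G B) (@ropp G B) (rzero B).
Proof. destruct HB as (h1&h2&h3&h4&_). repeat split; auto. Qed.
Lemma B_mulA {G} {B : ringD G} (HB : is_gring B) : forall x y z : B, rmul x (rmul y z) = rmul (rmul x y) z.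
Proof. apply HB. Qed.
Lemma B_mulDr {G} {B : ringD G} (HB : is_gring B) : forall x y z : B, rmul x (radd y z) = radd (rmul x y) (rmul x z).
Proof. apply HB. Qed.
Lemma B_mulDl {G} {B : ringD G} (HB : is_gring B) : forall x y z : B, rmul (radd x y) z = radd (rmul x z) (rmul y z).
Proof. apply HB. Qed.
Lemma B_act1 {G} {B : ringD G} (HB : is_gring B) : forall x : B, ract (gone G) x = x.
Proof. apply HB. Qed.
Lemma B_actM {G} {B : ringD G} (HB : is_gring B) : forall g h (x : B), ract (gmul g h) x = ract g (ract h x).
Proof. apply HB. Qed.
Lemma B_actD {G} {B : ringD G} (HB : is_gring B) : forall g (x y : B), ract g (radd x y) = radd (ract g x) (ract g y).
Proof. apply HB. Qed.
Lemma B_actMul {G} {B : ringD G} (HB : is_gring B) : forall g (x y : B), ract g (rmul x y) = rmul (ract g x) (ract g y).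
Proof. apply HB. Qed.
Lemma B_mul0r {G} {B : ringD G} (HB : is_gring B) : forall x : B, rmul x (rzero B) = rzero B.
Proof. intros. apply (ag_idem (B_AG HB)). rewrite <- B_mulDr, (ag_0l (B_AG HB)); auto. Qed.
Lemma B_mul0l {G} {B : ringD G} (HB : is_gring B) : forall x : B, rmul (rzero B) x = rzero B.
Proof. intros. apply (ag_idem (B_AG HB)). rewrite <- B_mulDl, (ag_0l (B_AG HB)); auto. Qed.
Lemma B_mulNr {G} {B : ringD G} (HB : is_gring B) : forall x y : B, rmul x (ropp y) = ropp (rmul x y).
Proof. intros. apply (ag_opp_uniq (B_AG HB)). rewrite <- B_mulDr, (ag_Nl (B_AG HB)), B_mul0r; auto. Qed.
Lemma B_act0 {G} {B : ringD G} (HB : is_gring B) : forall g, ract g (rzero B) = rzero B.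
Proof. intros. apply (ag_idem (B_AG HB)). rewrite <- B_actD, (ag_0l (B_AG HB)); auto. Qed.

Lemma g_mulV' (G : group) : forall x : G, gmul x (ginv x) = gone G.
Proof.
  intros x.
  rewrite <- (gmul1 (gmul x (ginv x))).
  rewrite <- (gmulV (ginv x)) at 1.
  rewrite <- gmulA, (gmulA (ginv x) x), gmulV, gmul1. apply gmulV.
Qed.

Lemma quad_ind {G} {B : ringD G} (HBq : quadratik B) (P : B -> Prop) :
  P (rzero B) -> (forall x y, P x -> P y -> P (radd x y)) -> (forall x y, P (rmul x y)) ->
  forall b, P b.
Proof.
  intros P0 PD PM b. destruct (HBq b) as [s ->]. unfold rsum.
  apply sum_closed; auto. intros t Ht. apply in_map_iff in Ht. destruct Ht as [p [<- _]]. auto.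
Qed.

Lemma M_AG {G} {R : ringD G} {Rin} {M : modD R} (H : is_rfmod Rin M (fun _ => True)) :
  AG (@madd G R M) (@mopp G R M) (mzero M).
Proof.
  destruct H as (_&_&_&_&_&h6&h7&h8&h9&_). repeat split; auto.
Qed.
Lemma M_smulDl {G} {R : ringD G} {Rin} {M : modD R} (H : is_rfmod Rin M (fun _ => True)) :
  forall (x y : M) a, Rin a -> msmul (madd x y) a = madd (msmul x a) (msmul y a).
Proof. destruct H as (_&_&_&_&_&_&_&_&_&h&_). auto. Qed.
Lemma M_smulDr {G} {R : ringD G} {Rin} {M : modD R} (H : is_rfmod Rin M (fun _ => True)) :
  forall (x : M) a b, Rin a -> Rin b -> msmul x (radd a b) = madd (msmul x a) (msmul x b).
Proof. destruct H as (_&_&_&_&_&_&_&_&_&_&h&_). auto. Qed.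
Lemma M_smulA {G} {R : ringD G} {Rin} {M : modD R} (H : is_rfmod Rin M (fun _ => True)) :
  forall (x : M) a b, Rin a -> Rin b -> msmul (msmul x a) b = msmul x (rmul a b).
Proof. destruct H as (_&_&_&_&_&_&_&_&_&_&_&h&_). auto. Qed.
Lemma M_act1 {G} {R : ringD G} {Rin} {M : modD R} (H : is_rfmod Rin M (fun _ => True)) :
  forall (x : M), mact (gone G) x = x.
Proof. destruct H as (_&_&_&_&_&_&_&_&_&_&_&_&h&_). auto. Qed.
Lemma M_actM {G} {R : ringD G} {Rin} {M : modD R} (H : is_rfmod Rin M (fun _ => True)) :
  forall g h (x : M), mact (gmul g h) x = mact g (mact h x).
Proof. destruct H as (_&_&_&_&_&_&_&_&_&_&_&_&_&h&_). auto. Qed.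
Lemma M_actD {G} {R : ringD G} {Rin} {M : modD R} (H : is_rfmod Rin M (fun _ => True)) :
  forall g (x y : M), mact g (madd x y) = madd (mact g x) (mact g y).
Proof. destruct H as (_&_&_&_&_&_&_&_&_&_&_&_&_&_&h&_). auto. Qed.
Lemma M_actS {G} {R : ringD G} {Rin} {M : modD R} (H : is_rfmod Rin M (fun _ => True)) :
  forall g (x : M) a, Rin a -> mact g (msmul x a) = msmul (mact g x) (ract g a).
Proof. destruct H as (_&_&_&_&_&_&_&_&_&_&_&_&_&_&_&h&_). auto. Qed.
Lemma M_fun {G} {R : ringD G} {Rin} {M : modD R} (H : is_rfmod Rin M (fun _ => True)) :
  forall phi, mfun M phi ->
      (forall x, Rin (phi x)) /\
      (forall x y, phi (madd x y) = radd (phi x) (phi y)) /\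
      (forall x a, Rin a -> phi (msmul x a) = rmul (phi x) a).
Proof.
  destruct H as (_&_&_&_&_&_&_&_&_&_&_&_&_&_&_&_&h&_).
  intros phi Hp. destruct (h phi Hp) as (a&b&c). repeat split; auto.
Qed.
Lemma M_fun0 {G} {R : ringD G} {Rin} {M : modD R} (H : is_rfmod Rin M (fun _ => True)) :
  mfun M (fun _ => rzero R).
Proof. destruct H as (_&_&_&_&_&_&_&_&_&_&_&_&_&_&_&_&_&h&_). auto. Qed.
Lemma M_funD {G} {R : ringD G} {Rin} {M : modD R} (H : is_rfmod Rin M (fun _ => True)) :
  forall phi psi, mfun M phi -> mfun M psi -> mfun M (fun x => radd (phi x) (psi x)).
Proof. destruct H as (_&_&_&_&_&_&_&_&_&_&_&_&_&_&_&_&_&_&h&_). auto. Qed.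
Lemma M_funN {G} {R : ringD G} {Rin} {M : modD R} (H : is_rfmod Rin M (fun _ => True)) :
  forall phi, mfun M phi -> mfun M (fun x => ropp (phi x)).
Proof. destruct H as (_&_&_&_&_&_&_&_&_&_&_&_&_&_&_&_&_&_&_&h&_). auto. Qed.
Lemma M_funM {G} {R : ringD G} {Rin} {M : modD R} (H : is_rfmod Rin M (fun _ => True)) :
  forall a phi, Rin a -> mfun M phi -> mfun M (fun x => rmul a (phi x)).
Proof. destruct H as (_&_&_&_&_&_&_&_&_&_&_&_&_&_&_&_&_&_&_&_&h&_). auto. Qed.
Lemma M_funG {G} {R : ringD G} {Rin} {M : modD R} (H : is_rfmod Rin M (fun _ => True)) :
  forall g phi, mfun M phi -> mfun M (fun x => ract g (phi (mact (ginv g) x))).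
Proof. destruct H as (_&_&_&_&_&_&_&_&_&_&_&_&_&_&_&_&_&_&_&_&_&h). auto. Qed.

Lemma M_smul0l {G} {R : ringD G} {Rin} {M : modD R} (H : is_rfmod Rin M (fun _ => True)) :
  forall a, Rin a -> msmul (mzero M) a = mzero M.
Proof. intros. apply (ag_idem (M_AG H)). rewrite <- (M_smulDl H), (ag_0l (M_AG H)); auto. Qed.
Lemma M_smul_sum_l {G} {R : ringD G} {Rin} {M : modD R} (H : is_rfmod Rin M (fun _ => True)) :
  forall a, Rin a -> forall l, msmul (msum M l) a = msum M (map (fun x => msmul x a) l).
Proof.
  intros a Ha l. unfold msum. apply (hom_sum _ _ _ _ (fun x => msmul x a)).
  intros; apply (M_smulDl H); auto. apply (M_smul0l H); auto.
Qed.
Lemma M_smulNl {G} {R : ringD G} {Rin} {M : modD R} (H : is_rfmod Rin M (fun _ => True)) :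
  forall (x : M) a, Rin a -> msmul (mopp x) a = mopp (msmul x a).
Proof.
  intros. apply (ag_opp_uniq (M_AG H)). rewrite <- (M_smulDl H), (ag_Nl (M_AG H)), (M_smul0l H); auto.
Qed.
Lemma M_act0 {G} {R : ringD G} {Rin} {M : modD R} (H : is_rfmod Rin M (fun _ => True)) :
  forall g, mact g (mzero M) = mzero M.
Proof. intros. apply (ag_idem (M_AG H)). rewrite <- (M_actD H), (ag_0l (M_AG H)); auto. Qed.
Lemma M_actVK {G} {R : ringD G} {Rin} {M : modD R} (H : is_rfmod Rin M (fun _ => True)) :
  forall g (x : M), mact (ginv g) (mact g x) = x.
Proof. intros. rewrite <- (M_actM H), gmulV, (M_act1 H); auto. Qed.
Lemma M_actKV {G} {R : ringD G} {Rin} {M : modD R} (H : is_rfmod Rin M (fun _ => True)) :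
  forall g (x : M), mact g (mact (ginv g) x) = x.
Proof. intros. rewrite <- (M_actM H), g_mulV', (M_act1 H); auto. Qed.
Lemma M_fun_0 {G} {R : ringD G} {Rin} {M : modD R} (H : is_rfmod Rin M (fun _ => True)) (HR : AG (@radd G R) (@ropp G R) (rzero R)) :
  forall phi, mfun M phi -> phi (mzero M) = rzero R.
Proof.
  intros phi Hp. apply (ag_idem HR). rewrite <- (proj1 (proj2 (M_fun H phi Hp))), (ag_0l (M_AG H)); auto.
Qed.

Lemma EB_AG {G} {B : ringD G} (HB : is_gring B) {E : modD B}
  (HE : is_rfmod (fun _ : rcar B => True) E (fun _ => True)) :
  AG (@madd _ _ (EBmod E)) (@mopp _ _ (EBmod E)) (mzero (EBmod E)).
Proof.
  pose proof (B_AG HB) as HBa. pose proof (M_AG HE) as HEa.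
  repeat split; intros; cbn; f_equal;
   first [apply (ag_A HBa) | apply (ag_A HEa) | apply (ag_C HBa) | apply (ag_C HEa)
         | apply (ag_0l HBa) | apply (ag_0l HEa) | apply (ag_Nl HBa) | apply (ag_Nl HEa)
         | idtac].
  destruct x as [u v]; cbn. rewrite (ag_0l HBa), (ag_0l HEa). auto.
Qed.

Lemma E_smul0r {G} {B : ringD G} (HB : is_gring B) {E : modD B}
  (HE : is_rfmod (fun _ : rcar B => True) E (fun _ => True)) :
  forall x : E, msmul x (rzero B) = mzero E.
Proof.
  intros. apply (ag_idem (M_AG HE)). rewrite <- (M_smulDr HE), (ag_0l (B_AG HB)); auto.
Qed.

Lemma EB_smulDl {G} {B : ringD G} (HB : is_gring B) {E : modD B}
  (HE : is_rfmod (fun _ : rcar B => True) E (fun _ => True)) :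
  forall (x y : EBmod E) a, msmul (madd x y) a = madd (msmul x a) (msmul y a).
Proof. intros. cbn. f_equal. apply (M_smulDl HE); auto. apply (B_mulDl HB). Qed.
Lemma EB_smulDr {G} {B : ringD G} (HB : is_gring B) {E : modD B}
  (HE : is_rfmod (fun _ : rcar B => True) E (fun _ => True)) :
  forall (x : EBmod E) a b, msmul x (radd a b) = madd (msmul x a) (msmul x b).
Proof. intros. cbn. f_equal. apply (M_smulDr HE); auto. apply (B_mulDr HB). Qed.
Lemma EB_smulA {G} {B : ringD G} (HB : is_gring B) {E : modD B}
  (HE : is_rfmod (fun _ : rcar B => True) E (fun _ => True)) :
  forall (x : EBmod E) a b, msmul (msmul x a) b = msmul x (rmul a b).
Proof. intros. cbn. f_equal. apply (M_smulA HE); auto. symmetry; apply (B_mulA HB). Qed.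
Lemma EB_smul0l {G} {B : ringD G} (HB : is_gring B) {E : modD B}
  (HE : is_rfmod (fun _ : rcar B => True) E (fun _ => True)) :
  forall a, msmul (mzero (EBmod E)) a = mzero (EBmod E).
Proof. intros. cbn. f_equal. apply (M_smul0l HE); auto. apply (B_mul0l HB). Qed.
Lemma EB_smul0r {G} {B : ringD G} (HB : is_gring B) {E : modD B}
  (HE : is_rfmod (fun _ : rcar B => True) E (fun _ => True)) :
  forall (x : EBmod E), msmul x (rzero B) = mzero (EBmod E).
Proof. intros. cbn. f_equal. apply (E_smul0r HB HE). apply (B_mul0r HB). Qed.
Lemma EB_actD {G} {B : ringD G} (HB : is_gring B) {E : modD B}
  (HE : is_rfmod (fun _ : rcar B => True) E (fun _ => True)) :
  forall g (x y : EBmod E), mact g (madd x y) = madd (mact g x) (mact g y).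
Proof. intros. cbn. f_equal. apply (M_actD HE). apply (B_actD HB). Qed.
Lemma EB_act0 {G} {B : ringD G} (HB : is_gring B) {E : modD B}
  (HE : is_rfmod (fun _ : rcar B => True) E (fun _ => True)) :
  forall g, mact g (mzero (EBmod E)) = mzero (EBmod E).
Proof. intros. cbn. f_equal. apply (M_act0 HE). apply (B_act0 HB). Qed.
Lemma EB_actVK {G} {B : ringD G} (HB : is_gring B) {E : modD B}
  (HE : is_rfmod (fun _ : rcar B => True) E (fun _ => True)) :
  forall g (x : EBmod E), mact (ginv g) (mact g x) = x.
Proof.
  intros g [u v]. cbn. f_equal. apply (M_actVK HE).
  rewrite <- (B_actM HB), gmulV, (B_act1 HB); auto.
Qed.

Lemma EBfun_props {G} {B : ringD G} (HB : is_gring B) {E : modD B}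
  (HE : is_rfmod (fun _ : rcar B => True) E (fun _ => True)) :
  forall psi, mfun (EBmod E) psi ->
   (forall x y, psi (madd x y) = radd (psi x) (psi y)) /\
   (forall x a, psi (msmul x a) = rmul (psi x) a) /\
   psi (mzero (EBmod E)) = rzero B.
Proof.
  pose proof (B_AG HB) as HBa.
  intros psi (phi & c & Hphi & ->). destruct (M_fun HE phi Hphi) as (_&hD&hS).
  assert (hD' : forall x y : EBmod E,
    radd (phi (fst (madd x y))) (rmul c (snd (madd x y))) =
    radd (radd (phi (fst x)) (rmul c (snd x))) (radd (phi (fst y)) (rmul c (snd y)))).
  { intros. cbn. rewrite hD, (B_mulDr HB). apply (ag_swap4 HBa). }
  repeat split.
  - exact hD'.
  - intros. cbn. rewrite hS by auto. rewrite (B_mulDl HB), (B_mulA HB). auto.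
  - apply (ag_idem HBa). rewrite <- hD'. cbn. rewrite (ag_0l (M_AG HE)), (ag_0l HBa). auto.
Qed.

Lemma EB_ind {G} {B : ringD G} (HB : is_gring B) (HBq : quadratik B) {E : modD B}
  (HE : is_rfmod (fun _ : rcar B => True) E (fun _ => True)) (HEw : weakly_cofull E)
  (P : EBmod E -> Prop) :
  P (mzero (EBmod E)) -> (forall x y, P x -> P y -> P (madd x y)) ->
  (forall e b, P (msmul e b)) -> forall e, P e.
Proof.
  pose proof (B_AG HB) as HBa. pose proof (M_AG HE) as HEa.
  intros P0 PD PS [u v].
  replace (u, v) with (@madd _ _ (EBmod E) (u, rzero B) (mzero E, v))
    by (cbn; rewrite (ag_0r HEa), (ag_0l HBa); auto).
  apply PD.
  - destruct (HEw u) as [s ->].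
    assert (Hh : forall l : list E, ((fold_right (@madd _ _ E) (mzero E) l, rzero B) : EBmod E) =
       fold_right (@madd _ _ (EBmod E)) (mzero (EBmod E)) (map (fun x : E => ((x, rzero B) : EBmod E)) l)).
    { apply (hom_sum _ _ _ _ (fun x : E => ((x, rzero B) : EBmod E))).
      intros; cbn; rewrite (ag_0l HBa); auto. auto. }
    unfold msum. rewrite Hh. apply sum_closed; auto.
    intros t Ht. rewrite map_map in Ht. apply in_map_iff in Ht. destruct Ht as [p [<- _]].
    replace ((msmul (fst p) (snd p), rzero B) : EBmod E) with (@msmul _ _ (EBmod E) (fst p, rzero B) (snd p)).
    apply PS. cbn. rewrite (B_mul0l HB). auto.
  - destruct (HBq v) as [s ->].
    assert (Hh : forall l : list B, ((mzero E, fold_right (@radd _ B) (rzero B) l) : EBmod E) =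
       fold_right (@madd _ _ (EBmod E)) (mzero (EBmod E)) (map (fun x : B => ((mzero E, x) : EBmod E)) l)).
    { apply (hom_sum _ _ _ _ (fun x : B => ((mzero E, x) : EBmod E))).
      intros; cbn; rewrite (ag_0l HEa); auto. auto. }
    unfold rsum. rewrite Hh. apply sum_closed; auto.
    intros t Ht. rewrite map_map in Ht. apply in_map_iff in Ht. destruct Ht as [p [<- _]].
    replace ((mzero E, rmul (fst p) (snd p)) : EBmod E) with (@msmul _ _ (EBmod E) (mzero E, fst p) (snd p)).
    apply PS. cbn. rewrite (M_smul0l HE); auto.
Qed.

Notation CK E K := (compact (EBmod E) (fun _ => True) K).

Lemma CK_addl {G} {B : ringD G} (HB : is_gring B) {E : modD B}
  (HE : is_rfmod (fun _ : rcar B => True) E (fun _ => True)) (K : KB E) :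
  CK E K -> forall x y, K (madd x y) = madd (K x) (K y).
Proof.
  intros [s [Hs HK]] x y. rewrite !HK by auto. unfold msum.
  rewrite <- (sum_map_add (EB_AG HB HE)). f_equal. apply map_ext_in. intros p Hp.
  destruct (Hs p Hp) as [_ Hf]. destruct (EBfun_props HB HE _ Hf) as (hD&_&_).
  rewrite hD. apply (EB_smulDr HB HE).
Qed.
Lemma CK_0 {G} {B : ringD G} (HB : is_gring B) {E : modD B}
  (HE : is_rfmod (fun _ : rcar B => True) E (fun _ => True)) (K : KB E) :
  CK E K -> K (mzero (EBmod E)) = mzero (EBmod E).
Proof.
  intros HK. apply (hom_zero (@madd _ _ (EBmod E)) _ (EB_AG HB HE)). apply (ag_0l (EB_AG HB HE)).
  apply (CK_addl HB HE K HK).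
Qed.
Lemma CK_smull {G} {B : ringD G} (HB : is_gring B) {E : modD B}
  (HE : is_rfmod (fun _ : rcar B => True) E (fun _ => True)) (K : KB E) :
  CK E K -> forall x a, K (msmul x a) = msmul (K x) a.
Proof.
  intros [s [Hs HK]] x a. rewrite !HK by auto. unfold msum.
  rewrite (hom_sum (@madd _ _ (EBmod E)) (mzero (EBmod E)) (@madd _ _ (EBmod E)) (mzero (EBmod E)) (fun z : EBmod E => msmul z a)).
  2: (intros; cbv beta; apply (EB_smulDl HB HE)). 2: (cbv beta; apply (EB_smul0l HB HE)).
  rewrite map_map. f_equal. apply map_ext_in. intros p Hp.
  destruct (Hs p Hp) as [_ Hf]. destruct (EBfun_props HB HE _ Hf) as (_&hS&_).
  rewrite hS, (EB_smulA HB HE). auto.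
Qed.
Lemma CK_comp {G} {B : ringD G} (HB : is_gring B) {E : modD B}
  (HE : is_rfmod (fun _ : rcar B => True) E (fun _ => True)) (K1 K2 : KB E) :
  CK E K1 -> CK E K2 -> CK E (fun y => K1 (K2 y)).
Proof.
  intros H1 [s [Hs HK]]. exists (map (fun p => (K1 (fst p), snd p)) s). split.
  - intros p Hp. apply in_map_iff in Hp. destruct Hp as [q [<- Hq]]. cbn. split; auto. apply Hs; auto.
  - intros x _. rewrite HK by auto. unfold msum.
    rewrite (hom_sum (@madd _ _ (EBmod E)) (mzero (EBmod E)) (@madd _ _ (EBmod E)) (mzero (EBmod E)) K1). 2: apply (CK_addl HB HE K1 H1). 2: apply (CK_0 HB HE K1 H1).
    rewrite !map_map. f_equal. apply map_ext. intros. cbn. apply (CK_smull HB HE K1 H1).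
Qed.
Lemma CK_theta {G} {B : ringD G} (HB : is_gring B) {E : modD B}
  (HE : is_rfmod (fun _ : rcar B => True) E (fun _ => True)) (e : EBmod E) psi :
  mfun (EBmod E) psi -> CK E (fun y => msmul e (psi y)).
Proof.
  intros Hp. exists [(e, psi)]. split.
  - intros p [<-|[]]. auto.
  - intros x _. cbn [map msum fold_right fst snd]. symmetry. apply (ag_0r (EB_AG HB HE)).
Qed.
Lemma CK_add {G} {B : ringD G} (HB : is_gring B) {E : modD B}
  (HE : is_rfmod (fun _ : rcar B => True) E (fun _ => True)) (K1 K2 : KB E) :
  CK E K1 -> CK E K2 -> CK E (fun y => madd (K1 y) (K2 y)).
Proof.
  intros [s1 [Hs1 HK1]] [s2 [Hs2 HK2]]. exists (s1 ++ s2). split.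
  - intros p Hp. apply in_app_or in Hp. destruct Hp; auto.
  - intros x _. rewrite HK1, HK2 by auto. unfold msum. rewrite map_app, (sum_app (EB_AG HB HE)). auto.
Qed.
Lemma CK_zero {G} {B : ringD G} {E : modD B} : CK E (fun _ => mzero (EBmod E)).
Proof. exists []. split. intros p []. intros. reflexivity. Qed.
Lemma CK_ext {G} {B : ringD G} {E : modD B} (K K' : KB E) :
  CK E K -> (forall y, K y = K' y) -> CK E K'.
Proof. intros [s [Hs HK]] He. exists s. split; auto. intros. rewrite <- He. auto. Qed.
Lemma CK_sum {G} {B : ringD G} (HB : is_gring B) {E : modD B}
  (HE : is_rfmod (fun _ : rcar B => True) E (fun _ => True)) (l : list (KB E)) :
  (forall K, In K l -> CK E K) -> CK E (rsum (KB E) l).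
Proof.
  intros Hl. unfold rsum. apply (sum_closed _ _ (fun K => CK E K)); auto.
  apply CK_zero. intros. apply (CK_add HB HE); auto.
Qed.

Lemma KB_AG {G} {B : ringD G} (HB : is_gring B) {E : modD B}
  (HE : is_rfmod (fun _ : rcar B => True) E (fun _ => True)) :
  AG (@radd _ (KB E)) (@ropp _ (KB E)) (rzero (KB E)).
Proof.
  pose proof (EB_AG HB HE) as H.
  repeat split; intros; apply functional_extensionality; intro w; cbn -[EBmod].
  apply (ag_A H). apply (ag_C H). apply (ag_0l H). apply (ag_Nl H).
Qed.

Lemma mb_add {G} {B : ringD G} (HB : is_gring B) {E : modD B}
  (HE : is_rfmod (fun _ : rcar B => True) E (fun _ => True)) (b c : B) :
  radd (mb E b) (mb E c) = mb E (radd b c).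
Proof.
  apply functional_extensionality; intro y. cbn. unfold mb. f_equal.
  apply (ag_0l (M_AG HE)). symmetry. apply (B_mulDl HB).
Qed.
Lemma mb_zero {G} {B : ringD G} (HB : is_gring B) {E : modD B} :
  mb E (rzero B) = rzero (KB E).
Proof. apply functional_extensionality; intro y. cbn. unfold mb. f_equal. apply (B_mul0l HB). Qed.
Lemma mb_comp {G} {B : ringD G} (HB : is_gring B) {E : modD B} (b c : B) :
  rmul (mb E b) (mb E c) = mb E (rmul b c).
Proof. apply functional_extensionality; intro y. cbn. unfold mb. cbn. f_equal. apply (B_mulA HB). Qed.
Lemma mb_act {G} {B : ringD G} (HB : is_gring B) {E : modD B}
  (HE : is_rfmod (fun _ : rcar B => True) E (fun _ => True)) g (b : B) :
  ract g (mb E b) = mb E (ract g b).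
Proof.
  apply functional_extensionality; intro y. cbn. unfold mb. cbn. f_equal.
  apply (M_act0 HE). rewrite (B_actMul HB), <- (B_actM HB), g_mulV', (B_act1 HB). auto.
Qed.
Lemma mb_addl {G} {B : ringD G} (HB : is_gring B) {E : modD B}
  (HE : is_rfmod (fun _ : rcar B => True) E (fun _ => True)) (c : B) :
  forall x y : EBmod E, mb E c (madd x y) = madd (mb E c x) (mb E c y).
Proof. intros. unfold mb. cbn. f_equal. symmetry; apply (ag_0l (M_AG HE)). apply (B_mulDr HB). Qed.
Lemma mb_0 {G} {B : ringD G} (HB : is_gring B) {E : modD B} (c : B) :
  mb E c (mzero (EBmod E)) = mzero (EBmod E).
Proof. unfold mb. cbn. f_equal. apply (B_mul0r HB). Qed.
Lemma mb_opp {G} {B : ringD G} (HB : is_gring B) {E : modD B}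
  (HE : is_rfmod (fun _ : rcar B => True) E (fun _ => True)) (c : B) :
  forall x : EBmod E, mb E c (mopp x) = mopp (mb E c x).
Proof. intros. unfold mb. cbn. f_equal. symmetry; apply (ag_opp0 (M_AG HE)). apply (B_mulNr HB). Qed.

Lemma CK_mb {G} {B : ringD G} (HB : is_gring B) (HBq : quadratik B) {E : modD B}
  (HE : is_rfmod (fun _ : rcar B => True) E (fun _ => True)) (b : B) : CK E (mb E b).
Proof.
  revert b. apply (quad_ind HBq).
  - rewrite (mb_zero HB). apply CK_zero.
  - intros x y Hx Hy. rewrite <- (mb_add HB HE). apply (CK_add HB HE); auto.
  - intros p q. apply (CK_ext (fun y => msmul (m := EBmod E) (mzero E, p) (radd (rzero B) (rmul q (snd y))))).
    + apply (CK_theta HB HE). exists (fun _ => rzero B), q. split; auto. apply (M_fun0 HE).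
    + intros y. unfold mb. cbn. f_equal. apply (M_smul0l HE); auto.
      rewrite (ag_0l (B_AG HB)). apply (B_mulA HB).
Qed.

Lemma EB_snd_add {G} {B : ringD G} {E : modD B} (x y : EBmod E) :
  snd (madd x y) = radd (snd x) (snd y).
Proof. reflexivity. Qed.
Lemma EB_snd_smul {G} {B : ringD G} {E : modD B} (x : EBmod E) a :
  snd (msmul x a) = rmul (snd x) a.
Proof. reflexivity. Qed.

Lemma corner {G} {B : ringD G} (HB : is_gring B) {E : modD B}
  (HE : is_rfmod (fun _ : rcar B => True) E (fun _ => True)) (K : KB E) :
  CK E K -> exists k, forall d, snd (K (mzero E, d)) = rmul k d.
Proof.
  intros [s [Hs HK]].
  assert (forall s' : list (EBmod E * (EBmod E -> B)), (forall p, In p s' -> mfun (EBmod E) (snd p)) ->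
    exists k, forall d, snd (msum (EBmod E) (map (fun p => msmul (fst p) (snd p (mzero E, d))) s')) = rmul k d).
  { induction s' as [|p s' IH]; intros Hs'.
    - exists (rzero B). intros. cbn. symmetry. apply (B_mul0l HB).
    - destruct IH as [k Hk]. intros; apply Hs'; right; auto.
      destruct (Hs' p (or_introl eq_refl)) as (phi & c & Hphi & Hpe).
      exists (radd (rmul (snd (fst p)) c) k). intros d. specialize (Hk d). unfold msum in Hk |- *. rewrite map_cons. cbn [fold_right]. rewrite EB_snd_add. transitivity (radd (snd (msmul (m := EBmod E) (fst p) (snd p (mzero E, d)))) (rmul k d)). f_equal. exact Hk. rewrite EB_snd_smul, Hpe. cbn.
      rewrite (M_fun_0 HE (B_AG HB) phi Hphi), (ag_0l (B_AG HB)), (B_mulDl HB), (B_mulA HB). auto. }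
  destruct (H s) as [k Hk]. intros; apply Hs; auto. exists k. intros d. rewrite HK by auto. apply Hk.
Qed.

Lemma corner_MB {G} {B : ringD G} (HB : is_gring B) {E : modD B}
  (HE : is_rfmod (fun _ : rcar B => True) E (fun _ => True)) (K : KB E) (b c : B) :
  CK E K -> MB E (rmul (mb E c) (rmul K (mb E b))).
Proof.
  intros HK. destruct (corner HB HE K HK) as [k Hk]. exists (rmul c (rmul k b)).
  apply functional_extensionality; intro y. cbn. unfold mb. f_equal.
  rewrite Hk. rewrite !(B_mulA HB). auto.
Qed.

Notation HFt E F := (is_rfmod (R := KB E) (compact (EBmod E) (fun _ => True)) F (fun _ => True)).

Lemma F_smul0r {G} {B : ringD G} (HB : is_gring B) {E : modD B}
  (HE : is_rfmod (fun _ : rcar B => True) E (fun _ => True)) {F : modD (KB E)} (HF : HFt E F) :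
  forall x : F, msmul x (rzero (KB E)) = mzero F.
Proof.
  intros. apply (ag_idem (M_AG HF)). rewrite <- (M_smulDr HF) by apply CK_zero.
  rewrite (ag_0l (KB_AG HB HE)). auto.
Qed.
Lemma F_smul_sum_r {G} {B : ringD G} (HB : is_gring B) {E : modD B}
  (HE : is_rfmod (fun _ : rcar B => True) E (fun _ => True)) {F : modD (KB E)} (HF : HFt E F) :
  forall (x : F) (l : list (KB E)), (forall K, In K l -> CK E K) ->
    msmul x (rsum (KB E) l) = msum F (map (msmul x) l).
Proof.
  intros x l. induction l as [|K l IH]; intros Hl.
  - apply (F_smul0r HB HE HF).
  - cbn [rsum map fold_right]. unfold rsum in IH. unfold msum. cbn [fold_right].
    rewrite (M_smulDr HF). rewrite IH. auto. intros; apply Hl; right; auto.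
    apply Hl; left; auto. apply (CK_sum HB HE). intros; apply Hl; right; auto.
Qed.
Lemma F_fun {G} {B : ringD G} (HB : is_gring B) {E : modD B}
  (HE : is_rfmod (fun _ : rcar B => True) E (fun _ => True)) {F : modD (KB E)} (HF : HFt E F) :
  forall phi, mfun F phi ->
   (forall x, CK E (phi x)) /\
   (forall x y, phi (madd x y) = radd (phi x) (phi y)) /\
   (forall (x : F) (a : KB E), CK E a -> phi (msmul x a) = rmul (phi x) a) /\
   phi (mzero F) = rzero (KB E).
Proof.
  intros phi Hp. destruct (M_fun HF phi Hp) as (h1&h2&h3). repeat split; auto.
  apply (M_fun_0 HF (KB_AG HB HE) phi Hp).
Qed.

Lemma FMB_single {G} {B : ringD G} (HB : is_gring B) {E : modD B}
  (HE : is_rfmod (fun _ : rcar B => True) E (fun _ => True)) {F : modD (KB E)} (HF : HFt E F) :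
  forall (x : F) b, FMB F (msmul x (mb E b)).
Proof.
  intros. exists [(x, b)]. cbn [map msum fold_right fst snd]. symmetry. apply (ag_0r (M_AG HF)).
Qed.
Lemma FMB_0 {G} {B : ringD G} {E : modD B} {F : modD (KB E)} : FMB F (mzero F).
Proof. exists []. reflexivity. Qed.
Lemma FMB_add {G} {B : ringD G} (HB : is_gring B) {E : modD B}
  (HE : is_rfmod (fun _ : rcar B => True) E (fun _ => True)) {F : modD (KB E)} (HF : HFt E F) :
  forall x y, FMB F x -> FMB F y -> FMB F (madd x y).
Proof.
  intros x y [s1 ->] [s2 ->]. exists (s1 ++ s2). unfold msum. rewrite map_app, (sum_app (M_AG HF)). auto.
Qed.
Lemma FMB_ind {G} {B : ringD G} {E : modD B} {F : modD (KB E)} (P : F -> Prop) :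
  P (mzero F) -> (forall x y, P x -> P y -> P (madd x y)) ->
  (forall (x : F) b, P (msmul x (mb E b))) -> forall x, FMB F x -> P x.
Proof.
  intros P0 PD PS x [s ->]. unfold msum. apply sum_closed; auto.
  intros t Ht. apply in_map_iff in Ht. destruct Ht as [p [<- _]]. auto.
Qed.
Lemma FMB_smul {G} {B : ringD G} (HB : is_gring B) (HBq : quadratik B) {E : modD B}
  (HE : is_rfmod (fun _ : rcar B => True) E (fun _ => True)) {F : modD (KB E)} (HF : HFt E F) :
  forall x c, FMB F x -> FMB F (msmul x (mb E c)).
Proof.
  intros x c. apply (FMB_ind (fun x => FMB F (msmul x (mb E c)))).
  - rewrite (M_smul0l HF) by apply (CK_mb HB HBq HE). apply FMB_0.
  - intros. rewrite (M_smulDl HF) by apply (CK_mb HB HBq HE). apply (FMB_add HB HE HF); auto.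
  - intros. rewrite (M_smulA HF) by apply (CK_mb HB HBq HE). rewrite (mb_comp HB). apply (FMB_single HB HE HF).
Qed.
Lemma FMB_opp {G} {B : ringD G} (HB : is_gring B) (HBq : quadratik B) {E : modD B}
  (HE : is_rfmod (fun _ : rcar B => True) E (fun _ => True)) {F : modD (KB E)} (HF : HFt E F) :
  forall x, FMB F x -> FMB F (mopp x).
Proof.
  apply (FMB_ind (fun x => FMB F (mopp x))).
  - rewrite (ag_opp0 (M_AG HF)). apply FMB_0.
  - intros. rewrite (ag_oppD (M_AG HF)). apply (FMB_add HB HE HF); auto.
  - intros. rewrite <- (M_smulNl HF) by apply (CK_mb HB HBq HE). apply (FMB_single HB HE HF).
Qed.
Lemma FMB_act {G} {B : ringD G} (HB : is_gring B) (HBq : quadratik B) {E : modD B}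
  (HE : is_rfmod (fun _ : rcar B => True) E (fun _ => True)) {F : modD (KB E)} (HF : HFt E F) :
  forall g x, FMB F x -> FMB F (mact g x).
Proof.
  intros g. apply (FMB_ind (fun x => FMB F (mact g x))).
  - rewrite (M_act0 HF). apply FMB_0.
  - intros. rewrite (M_actD HF). apply (FMB_add HB HE HF); auto.
  - intros. rewrite (M_actS HF) by apply (CK_mb HB HBq HE). rewrite (mb_act HB HE). apply (FMB_single HB HE HF).
Qed.

Lemma MB_add {G} {B : ringD G} (HB : is_gring B) {E : modD B}
  (HE : is_rfmod (fun _ : rcar B => True) E (fun _ => True)) :
  forall a b, MB E a -> MB E b -> MB E (radd a b).
Proof. intros a b [x ->] [y ->]. exists (radd x y). apply (mb_add HB HE). Qed.
Lemma MB_zero {G} {B : ringD G} (HB : is_gring B) {E : modD B} : MB E (rzero (KB E)).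
Proof. exists (rzero B). symmetry. apply (mb_zero HB). Qed.
Lemma MB_CK {G} {B : ringD G} (HB : is_gring B) (HBq : quadratik B) {E : modD B}
  (HE : is_rfmod (fun _ : rcar B => True) E (fun _ => True)) : forall a, MB E a -> CK E a.
Proof. intros a [b ->]. apply (CK_mb HB HBq HE). Qed.

Lemma mbc_add {G} {B : ringD G} (HB : is_gring B) {E : modD B}
  (HE : is_rfmod (fun _ : rcar B => True) E (fun _ => True)) (c : B) (K1 K2 : KB E) :
  rmul (mb E c) (radd K1 K2) = radd (rmul (mb E c) K1) (rmul (mb E c) K2).
Proof. apply functional_extensionality; intro y. cbn -[mb]. apply (mb_addl HB HE). Qed.
Lemma mbc_zero {G} {B : ringD G} (HB : is_gring B) {E : modD B} (c : B) :
  rmul (mb E c) (rzero (KB E)) = rzero (KB E).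
Proof. apply functional_extensionality; intro y. cbn -[mb]. apply (mb_0 HB). Qed.
Lemma mbc_sum {G} {B : ringD G} (HB : is_gring B) {E : modD B}
  (HE : is_rfmod (fun _ : rcar B => True) E (fun _ => True)) (c : B) (l : list (KB E)) :
  rmul (mb E c) (rsum (KB E) l) = rsum (KB E) (map (rmul (mb E c)) l).
Proof.
  unfold rsum. apply (hom_sum _ _ _ _ (rmul (mb E c))). apply (mbc_add HB HE). apply (mbc_zero HB).
Qed.

Lemma MB_phi {G} {B : ringD G} (HB : is_gring B) (HBq : quadratik B) {E : modD B}
  (HE : is_rfmod (fun _ : rcar B => True) E (fun _ => True)) {F : modD (KB E)} (HF : HFt E F) :
  forall phi c x, mfun F phi -> FMB F x -> MB E (rmul (mb E c) (phi x)).
Proof.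
  intros phi c x Hp. destruct (F_fun HB HE HF phi Hp) as (h1&h2&h3&h4).
  apply (FMB_ind (fun x => MB E (rmul (mb E c) (phi x)))).
  - rewrite h4, (mbc_zero HB). apply (MB_zero HB).
  - intros. rewrite h2, (mbc_add HB HE). apply (MB_add HB HE); auto.
  - intros. rewrite h3 by apply (CK_mb HB HBq HE). apply (corner_MB HB HE); auto.
Qed.

Definition RepF {G} {B : ringD G} {E : modD B} (F : modD (KB E)) (f : mcar F -> mcar F) : Prop :=
  exists L : list (mcar F * rcar B * (mcar F -> rcar (KB E))),
    (forall t, In t L -> FMB F (fst (fst t)) /\ mfun F (snd t)) /\
    forall x, f x = msum F (map (fun t => msmul (fst (fst t)) (rmul (mb E (snd (fst t))) (snd t x))) L).

Lemma RepF_zero {G} {B : ringD G} {E : modD B} (F : modD (KB E)) : RepF F (fun _ => mzero F).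
Proof. exists []. split. intros t []. reflexivity. Qed.
Lemma RepF_ext {G} {B : ringD G} {E : modD B} (F : modD (KB E)) f g :
  RepF F f -> (forall x, f x = g x) -> RepF F g.
Proof. intros [L [H1 H2]] He. exists L. split; auto. intros; rewrite <- He; auto. Qed.
Lemma RepF_add {G} {B : ringD G} (HB : is_gring B) {E : modD B}
  (HE : is_rfmod (fun _ : rcar B => True) E (fun _ => True)) {F : modD (KB E)} (HF : HFt E F) f g :
  RepF F f -> RepF F g -> RepF F (fun x => madd (f x) (g x)).
Proof.
  intros [L1 [H1 E1]] [L2 [H2 E2]]. exists (L1 ++ L2). split.
  - intros t Ht. apply in_app_or in Ht. destruct Ht; auto.
  - intros x. rewrite E1, E2. unfold msum. rewrite map_app, (sum_app (M_AG HF)). auto.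
Qed.
Lemma RepF_sumlist {G} {B : ringD G} (HB : is_gring B) {E : modD B}
  (HE : is_rfmod (fun _ : rcar B => True) E (fun _ => True)) {F : modD (KB E)} (HF : HFt E F)
  {T} (s : list T) (g : T -> mcar F -> mcar F) :
  (forall t, In t s -> RepF F (g t)) -> RepF F (fun x => msum F (map (fun t => g t x) s)).
Proof.
  induction s as [|t s IH]; intros Hs.
  - apply RepF_zero.
  - apply (RepF_ext F (fun x => madd (g t x) (msum F (map (fun t => g t x) s)))).
    apply (RepF_add HB HE HF). apply Hs; left; auto. apply IH; intros; apply Hs; right; auto.
    intros; reflexivity.
Qed.

Lemma repA {G} {B : ringD G} (HB : is_gring B) (HBq : quadratik B) {E : modD B}
  (HE : is_rfmod (fun _ : rcar B => True) E (fun _ => True)) {F : modD (KB E)} (HF : HFt E F)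
  (z : F) phi (Hphi : mfun F phi) (e : EBmod E) (p1 p2 q1 q2 : B) psi (Hpsi : mfun (EBmod E) psi) :
  RepF F (fun x => msmul z (fun y => msmul (m := EBmod E) (msmul (m := EBmod E) e (rmul (rmul p1 p2) (rmul q1 q2))) (psi (phi x y)))).
Proof.
  set (T1 := fun w : EBmod E => msmul (m := EBmod E) e (radd (rzero B) (rmul p1 (snd w)))).
  set (T2 := fun w : EBmod E => msmul (m := EBmod E) (mzero E, q2) (psi w)).
  assert (C1 : CK E T1).
  { apply (CK_theta HB HE). exists (fun _ => rzero B), p1. split. apply (M_fun0 HE). reflexivity. }
  assert (C2 : CK E T2) by (apply (CK_theta HB HE); auto).
  destruct (F_fun HB HE HF phi Hphi) as (hK&_&_&_).
  exists [((msmul (msmul z T1) (mb E p2), q1), fun x => rmul (r := KB E) T2 (phi x))]. split.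
  - intros t [<-|[]]. cbn [fst snd]. split. apply (FMB_single HB HE HF).
    apply (M_funM HF); auto.
  - intros x. cbn [map msum fold_right fst snd]. rewrite (ag_0r (M_AG HF)).
    assert (C3 : CK E (rmul (r := KB E) T2 (phi x))) by (apply (CK_comp HB HE T2 (phi x)); auto).
    assert (C4 : CK E (rmul (r := KB E) (mb E q1) (rmul (r := KB E) T2 (phi x)))) by (apply (CK_comp HB HE (mb E q1) (rmul (r := KB E) T2 (phi x))); auto; apply (CK_mb HB HBq HE)).
    rewrite (M_smulA HF) by (auto; apply (CK_mb HB HBq HE)).
    rewrite (M_smulA HF); auto. 2: apply (CK_comp HB HE (mb E p2)); auto; apply (CK_mb HB HBq HE).
    f_equal. apply functional_extensionality; intro y. cbn -[EBmod]. unfold T1, T2. unfold mb. cbn [fst snd].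
    rewrite (EB_snd_smul (mzero E, q2)). cbn [snd].
    rewrite (EB_smulA HB HE), (ag_0l (B_AG HB)). f_equal. rewrite !(B_mulA HB). auto.
Qed.

Lemma RepF_fadd {G} {B : ringD G} (HB : is_gring B) {E : modD B}
  (HE : is_rfmod (fun _ : rcar B => True) E (fun _ => True)) {F : modD (KB E)} (HF : HFt E F)
  (z : F) (A1 A2 C : F -> KB E) :
  (forall x, CK E (A1 x)) -> (forall x, CK E (A2 x)) ->
  RepF F (fun x => msmul z (A1 x)) -> RepF F (fun x => msmul z (A2 x)) ->
  (forall x y, C x y = madd (A1 x y) (A2 x y)) -> RepF F (fun x => msmul z (C x)).
Proof.
  intros H1 H2 R1 R2 HC. apply (RepF_ext F (fun x => madd (msmul z (A1 x)) (msmul z (A2 x)))).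
  apply (RepF_add HB HE HF); auto.
  intros x. replace (C x) with (radd (r := KB E) (A1 x) (A2 x)).
  symmetry. apply (M_smulDr HF); auto.
  apply functional_extensionality; intro y. rewrite HC. reflexivity.
Qed.
Lemma RepF_fzero {G} {B : ringD G} (HB : is_gring B) {E : modD B}
  (HE : is_rfmod (fun _ : rcar B => True) E (fun _ => True)) {F : modD (KB E)} (HF : HFt E F)
  (z : F) (C : F -> KB E) :
  (forall x y, C x y = mzero (EBmod E)) -> RepF F (fun x => msmul z (C x)).
Proof.
  intros HC. apply (RepF_ext F (fun _ => mzero F)). apply RepF_zero.
  intros x. replace (C x) with (rzero (KB E)). symmetry. apply (F_smul0r HB HE HF).
  apply functional_extensionality; intro y. rewrite HC. reflexivity.
Qed.

Lemma repB {G} {B : ringD G} (HB : is_gring B) (HBq : quadratik B) {E : modD B}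
  (HE : is_rfmod (fun _ : rcar B => True) E (fun _ => True)) {F : modD (KB E)} (HF : HFt E F)
  (z : F) phi (Hphi : mfun F phi) (b : B) :
  forall (e : EBmod E) psi, mfun (EBmod E) psi ->
  RepF F (fun x => msmul z (fun y => msmul (m := EBmod E) (msmul (m := EBmod E) e b) (psi (phi x y)))).
Proof.
  destruct (F_fun HB HE HF phi Hphi) as (hK&_&_&_).
  set (Pb := fun b : B => forall (e : EBmod E) psi, mfun (EBmod E) psi ->
    RepF F (fun x => msmul z (fun y => msmul (m := EBmod E) (msmul (m := EBmod E) e b) (psi (phi x y))))).
  assert (P0 : Pb (rzero B)).
  { intros e psi Hpsi. apply (RepF_fzero HB HE HF). intros. rewrite (EB_smul0r HB HE). apply (EB_smul0l HB HE). }
  assert (PD : forall b1 b2, Pb b1 -> Pb b2 -> Pb (radd b1 b2)).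
  { intros b1 b2 H1 H2 e psi Hpsi.
    apply (RepF_fadd HB HE HF z (fun x y => msmul (m := EBmod E) (msmul (m := EBmod E) e b1) (psi (phi x y)))
                                (fun x y => msmul (m := EBmod E) (msmul (m := EBmod E) e b2) (psi (phi x y)))).
    - intros x. apply (CK_comp HB HE (fun w => msmul (m := EBmod E) (msmul (m := EBmod E) e b1) (psi w)) (phi x)); auto.
      apply (CK_theta HB HE); auto.
    - intros x. apply (CK_comp HB HE (fun w => msmul (m := EBmod E) (msmul (m := EBmod E) e b2) (psi w)) (phi x)); auto.
      apply (CK_theta HB HE); auto.
    - apply H1; auto.
    - apply H2; auto.
    - intros. rewrite (EB_smulDr HB HE). apply (EB_smulDl HB HE). }
  assert (PM : forall p1 p2 q1 q2, Pb (rmul (rmul p1 p2) (rmul q1 q2))).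
  { intros. intros e psi Hpsi. apply (repA HB HBq HE HF); auto. }
  assert (PM2 : forall p q, Pb (rmul p q)).
  { intros p q. revert q. apply (quad_ind HBq (fun q => Pb (rmul p q))).
    - rewrite (B_mul0r HB). auto.
    - intros. rewrite (B_mulDr HB). auto.
    - intros q1 q2. revert p. apply (quad_ind HBq (fun p => Pb (rmul p (rmul q1 q2)))).
      + rewrite (B_mul0l HB). auto.
      + intros. rewrite (B_mulDl HB). auto.
      + auto. }
  revert b. apply (quad_ind HBq Pb); auto.
Qed.

Lemma repC {G} {B : ringD G} (HB : is_gring B) (HBq : quadratik B) {E : modD B}
  (HE : is_rfmod (fun _ : rcar B => True) E (fun _ => True)) (HEw : weakly_cofull E)
  {F : modD (KB E)} (HF : HFt E F)
  (z : F) phi (Hphi : mfun F phi) (e : EBmod E) :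
  forall psi, mfun (EBmod E) psi ->
  RepF F (fun x => msmul z (fun y => msmul (m := EBmod E) e (psi (phi x y)))).
Proof.
  destruct (F_fun HB HE HF phi Hphi) as (hK&_&_&_).
  revert e. apply (EB_ind HB HBq HE HEw (fun e => forall psi, mfun (EBmod E) psi ->
  RepF F (fun x => msmul z (fun y => msmul (m := EBmod E) e (psi (phi x y)))))).
  - intros psi Hpsi. apply (RepF_fzero HB HE HF). intros. apply (EB_smul0l HB HE).
  - intros e1 e2 H1 H2 psi Hpsi.
    apply (RepF_fadd HB HE HF z (fun x y => msmul (m := EBmod E) e1 (psi (phi x y)))
                                (fun x y => msmul (m := EBmod E) e2 (psi (phi x y)))).
    + intros x. apply (CK_comp HB HE (fun w => msmul (m := EBmod E) e1 (psi w)) (phi x)); auto.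
      apply (CK_theta HB HE); auto.
    + intros x. apply (CK_comp HB HE (fun w => msmul (m := EBmod E) e2 (psi w)) (phi x)); auto.
      apply (CK_theta HB HE); auto.
    + apply H1; auto.
    + apply H2; auto.
    + intros. apply (EB_smulDl HB HE).
  - intros e b psi Hpsi. apply (repB HB HBq HE HF); auto.
Qed.

Lemma repD {G} {B : ringD G} (HB : is_gring B) (HBq : quadratik B) {E : modD B}
  (HE : is_rfmod (fun _ : rcar B => True) E (fun _ => True)) (HEw : weakly_cofull E)
  {F : modD (KB E)} (HF : HFt E F)
  (z : F) phi (Hphi : mfun F phi) (K : KB E) :
  CK E K -> RepF F (fun x => msmul z (rmul (r := KB E) K (phi x))).
Proof.
  destruct (F_fun HB HE HF phi Hphi) as (hK&_&_&_).
  intros HK. destruct HK as [s [Hs HKe]].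
  assert (Hind : forall s' : list (EBmod E * (EBmod E -> B)), (forall p, In p s' -> mfun (EBmod E) (snd p)) ->
     RepF F (fun x => msmul z (fun y => msum (EBmod E) (map (fun p => msmul (fst p) (snd p (phi x y))) s')))).
  { induction s' as [|p s' IH]; intros Hs'.
    - apply (RepF_fzero HB HE HF). intros; reflexivity.
    - apply (RepF_fadd HB HE HF z (fun x y => msmul (m := EBmod E) (fst p) (snd p (phi x y)))
                 (fun x y => msum (EBmod E) (map (fun p => msmul (fst p) (snd p (phi x y))) s'))).
      + intros x. apply (CK_comp HB HE (fun w => msmul (m := EBmod E) (fst p) (snd p w)) (phi x)); auto.
        apply (CK_theta HB HE); apply Hs'; left; auto.
      + intros x. apply (CK_comp HB HE (fun w => msum (EBmod E) (map (fun p => msmul (fst p) (snd p w)) s')) (phi x)); auto.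
        exists s'. split; auto. intros; split; auto; apply Hs'; right; auto.
      + apply (repC HB HBq HE HEw HF); auto. apply Hs'; left; auto.
      + apply IH; intros; apply Hs'; right; auto.
      + intros; reflexivity. }
  apply (RepF_ext F _ _ (Hind s (fun p Hp => proj2 (Hs p Hp)))).
  intros x. f_equal. apply functional_extensionality; intro y. cbn -[EBmod msum]. rewrite HKe; auto.
Qed.

Lemma rep_zphi {G} {B : ringD G} (HB : is_gring B) (HBq : quadratik B) {E : modD B}
  (HE : is_rfmod (fun _ : rcar B => True) E (fun _ => True)) (HEw : weakly_cofull E)
  {F : modD (KB E)} (HF : HFt E F) (HFc : cofull F (fun _ => True))
  (z : F) phi (Hphi : mfun F phi) : RepF F (fun x => msmul z (phi x)).
Proof.
  destruct (F_fun HB HE HF phi Hphi) as (hK&_&_&_).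
  destruct (HFc z I) as [s [Hs ->]].
  apply (RepF_ext F (fun x => msum F (map (fun t => msmul (fst (fst t)) (rmul (r := KB E) (snd (fst t) (snd t)) (phi x))) s))).
  - apply (RepF_sumlist HB HE HF s (fun t x => msmul (fst (fst t)) (rmul (r := KB E) (snd (fst t) (snd t)) (phi x)))).
    intros t Ht. destruct (Hs t Ht) as (_&Hm&_). apply (repD HB HBq HE HEw HF); auto.
    apply (F_fun HB HE HF _ Hm).
  - intros x. rewrite (M_smul_sum_l HF) by auto. rewrite map_map. f_equal. apply map_ext_in.
    intros t Ht. destruct (Hs t Ht) as (_&Hm&_). rewrite (M_smulA HF); auto. apply (F_fun HB HE HF _ Hm).
Qed.

Lemma rep_compact {G} {B : ringD G} (HB : is_gring B) (HBq : quadratik B) {E : modD B}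
  (HE : is_rfmod (fun _ : rcar B => True) E (fun _ => True)) (HEw : weakly_cofull E)
  {F : modD (KB E)} (HF : HFt E F) (HFc : cofull F (fun _ => True)) (T : F -> F) :
  compact F (fun _ => True) T -> RepF F T.
Proof.
  intros [s [Hs HT]]. apply (RepF_ext F (fun x => msum F (map (fun p => msmul (fst p) (snd p x)) s))).
  - apply (RepF_sumlist HB HE HF s (fun p x => msmul (fst p) (snd p x))).
    intros p Hp. apply (rep_zphi HB HBq HE HEw HF HFc). apply Hs; auto.
  - intros; rewrite HT; auto.
Qed.

Lemma psi_single {G} {B : ringD G} (HB : is_gring B) {E : modD B}
  (HE : is_rfmod (fun _ : rcar B => True) E (fun _ => True)) {F : modD (KB E)}
  (r : B) (phi : F -> KB E) : mfun F phi -> ThetaFMB F (fun x => rmul (r := KB E) (mb E r) (phi x)).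
Proof.
  intros Hp. exists [(mb E r, phi)]. split.
  - intros p [<-|[]]. split; auto. exists r; auto.
  - intros x _. cbn [map rsum fold_right fst snd]. symmetry. apply (ag_0r (KB_AG HB HE)).
Qed.

Lemma rsum_rmul_r {G} {B : ringD G} {E : modD B} (a : KB E) (l : list (KB E)) :
  rmul (rsum (KB E) l) a = rsum (KB E) (map (fun K => rmul K a) l).
Proof.
  induction l as [|K l IH]. reflexivity.
  cbn [map rsum fold_right]. unfold rsum in IH. rewrite <- IH. reflexivity.
Qed.

Lemma theta_MB {G} {B : ringD G} (HB : is_gring B) (HBq : quadratik B) {E : modD B}
  (HE : is_rfmod (fun _ : rcar B => True) E (fun _ => True)) {F : modD (KB E)} (HF : HFt E F) :
  forall psi x, ThetaFMB F psi -> FMB F x -> MB E (psi x).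
Proof.
  intros psi x [s [Hs Hp]] Hx. rewrite Hp by auto. unfold rsum.
  apply sum_closed. apply (MB_zero HB). apply (MB_add HB HE).
  intros t Ht. apply in_map_iff in Ht. destruct Ht as [p [<- Hp']].
  destruct (Hs p Hp') as [[c Hc] Hm]. rewrite Hc. apply (MB_phi HB HBq HE HF); auto.
Qed.
Lemma theta_add {G} {B : ringD G} (HB : is_gring B) (HBq : quadratik B) {E : modD B}
  (HE : is_rfmod (fun _ : rcar B => True) E (fun _ => True)) {F : modD (KB E)} (HF : HFt E F) :
  forall psi x y, ThetaFMB F psi -> FMB F x -> FMB F y -> psi (madd x y) = radd (psi x) (psi y).
Proof.
  intros psi x y [s [Hs Hp]] Hx Hy. rewrite !Hp by (auto; apply (FMB_add HB HE HF); auto).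
  unfold rsum. rewrite <- (sum_map_add (KB_AG HB HE)). f_equal. apply map_ext_in.
  intros p Hp'. destruct (Hs p Hp') as [[c Hc] Hm]. rewrite Hc.
  destruct (F_fun HB HE HF _ Hm) as (_&hD&_). rewrite hD. apply (mbc_add HB HE).
Qed.
Lemma theta_smul {G} {B : ringD G} (HB : is_gring B) (HBq : quadratik B) {E : modD B}
  (HE : is_rfmod (fun _ : rcar B => True) E (fun _ => True)) {F : modD (KB E)} (HF : HFt E F) :
  forall psi x a, ThetaFMB F psi -> FMB F x -> MB E a -> psi (msmul x a) = rmul (psi x) a.
Proof.
  intros psi x a [s [Hs Hp]] Hx [c ->]. rewrite !Hp by (auto; apply (FMB_smul HB HBq HE HF); auto).
  rewrite rsum_rmul_r, map_map. f_equal. apply map_ext_in.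
  intros p Hp'. destruct (Hs p Hp') as [_ Hm].
  destruct (F_fun HB HE HF _ Hm) as (_&_&hS&_). rewrite hS. reflexivity. apply (CK_mb HB HBq HE).
Qed.

Lemma FMB_sum {G} {B : ringD G} (HB : is_gring B) {E : modD B}
  (HE : is_rfmod (fun _ : rcar B => True) E (fun _ => True)) {F : modD (KB E)} (HF : HFt E F) :
  forall l, (forall x, In x l -> FMB F x) -> FMB F (msum F l).
Proof. apply sum_closed. apply FMB_0. apply (FMB_add HB HE HF). Qed.

Lemma RepF_FMB {G} {B : ringD G} (HB : is_gring B) (HBq : quadratik B) {E : modD B}
  (HE : is_rfmod (fun _ : rcar B => True) E (fun _ => True)) {F : modD (KB E)} (HF : HFt E F) T :
  RepF F T -> forall x, FMB F x -> FMB F (T x).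
Proof.
  intros [L [HL HT]] x Hx. rewrite HT. apply (FMB_sum HB HE HF).
  intros y Hy. apply in_map_iff in Hy. destruct Hy as [t [<- Ht]]. destruct (HL t Ht) as [H1 H2].
  destruct (MB_phi HB HBq HE HF _ (snd (fst t)) x H2 Hx) as [c Hc]. rewrite Hc.
  apply (FMB_smul HB HBq HE HF); auto.
Qed.

Lemma RepF_compact {G} {B : ringD G} (HB : is_gring B) {E : modD B}
  (HE : is_rfmod (fun _ : rcar B => True) E (fun _ => True)) {F : modD (KB E)} T :
  RepF F T -> compact (FMBmod F) (FMB F) T.
Proof.
  intros [L [HL HT]]. exists (map (fun t => (fst (fst t), fun x => rmul (r := KB E) (mb E (snd (fst t))) (snd t x))) L).
  split.
  - intros p Hp. apply in_map_iff in Hp. destruct Hp as [t [<- Ht]]. destruct (HL t Ht). cbn [fst snd].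
    split; auto. apply (psi_single HB HE); auto.
  - intros x _. rewrite HT, map_map. reflexivity.
Qed.

Lemma part2 {G} {B : ringD G} (HB : is_gring B) (HBq : quadratik B) {E : modD B}
  (HE : is_rfmod (fun _ : rcar B => True) E (fun _ => True))
  {F : modD (KB E)} (HF : HFt E F) :
  is_rfmod (R := KB E) (MB E) (FMBmod F) (FMB F).
Proof.
  pose proof (MB_CK HB HBq HE) as MC.
  pose proof (KB_AG HB HE) as KA.
  unfold is_rfmod. cbn [madd mopp mzero msmul mact mfun FMBmod].
  split. { apply FMB_0. }
  split. { apply (FMB_add HB HE HF). }
  split. { apply (FMB_opp HB HBq HE HF). }
  split. { intros x a Hx [c ->]. apply (FMB_smul HB HBq HE HF); auto. }
  split. { intros. apply (FMB_act HB HBq HE HF); auto. }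
  split. { intros. apply (ag_A (M_AG HF)). }
  split. { intros. apply (ag_C (M_AG HF)). }
  split. { intros. apply (ag_0l (M_AG HF)). }
  split. { intros. apply (ag_Nl (M_AG HF)). }
  split. { intros. apply (M_smulDl HF); auto. }
  split. { intros. apply (M_smulDr HF); auto. }
  split. { intros. apply (M_smulA HF); auto. }
  split. { intros. apply (M_act1 HF). }
  split. { intros. apply (M_actM HF). }
  split. { intros. apply (M_actD HF). }
  split. { intros. apply (M_actS HF); auto. }
  split. { intros psi Hpsi. split; [|split].
    - intros. apply (theta_MB HB HBq HE HF); auto.
    - intros. apply (theta_add HB HBq HE HF); auto.
    - intros. apply (theta_smul HB HBq HE HF); auto. }
  split. { exists []. split. intros p []. intros; reflexivity. }
  split. { intros psi1 psi2 [s1 [Hs1 H1]] [s2 [Hs2 H2]]. exists (s1 ++ s2). split.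
    - intros p Hp. apply in_app_or in Hp. destruct Hp; auto.
    - intros x Hx. rewrite H1, H2 by auto. unfold rsum. rewrite map_app, (sum_app KA). reflexivity. }
  split. { intros psi [s [Hs Hp]]. exists (map (fun p => (fst p, fun x => ropp (snd p x))) s). split.
    - intros p Hp'. apply in_map_iff in Hp'. destruct Hp' as [q [<- Hq]]. destruct (Hs q Hq). cbn [fst snd].
      split; auto. apply (M_funN HF); auto.
    - intros x Hx. rewrite Hp by auto. unfold rsum.
      rewrite (hom_sum (@radd _ (KB E)) (rzero (KB E)) (@radd _ (KB E)) (rzero (KB E)) (@ropp _ (KB E))). 2: apply (ag_oppD KA). 2: apply (ag_opp0 KA).
      rewrite !map_map. f_equal. apply map_ext_in. intros p Hp'. destruct (Hs p Hp') as [[c ->] _].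
      apply functional_extensionality; intro y. cbn -[mb EBmod]. symmetry. apply (mb_opp HB HE). }
  split. { intros a psi [c ->] [s [Hs Hp]]. exists (map (fun p => (rmul (r := KB E) (mb E c) (fst p), snd p)) s). split.
    - intros p Hp'. apply in_map_iff in Hp'. destruct Hp' as [q [<- Hq]]. destruct (Hs q Hq) as [[b ->] Hm]. cbn [fst snd].
      split; auto. exists (rmul c b). apply (mb_comp HB).
    - intros x Hx. rewrite Hp by auto. rewrite (mbc_sum HB HE), !map_map. reflexivity. }
  { intros g psi [s [Hs Hp]].
    exists (map (fun p => (ract (r := KB E) g (fst p), fun x => ract (r := KB E) g (snd p (mact (ginv g) x)))) s). split.
    - intros p Hp'. apply in_map_iff in Hp'. destruct Hp' as [q [<- Hq]]. destruct (Hs q Hq) as [[b ->] Hm]. cbn [fst snd].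
      split. exists (ract g b). apply (mb_act HB HE). apply (M_funG HF); auto.
    - intros x Hx. rewrite Hp by (apply (FMB_act HB HBq HE HF); auto). unfold rsum.
      rewrite (hom_sum (@radd _ (KB E)) (rzero (KB E)) (@radd _ (KB E)) (rzero (KB E)) (@ract _ (KB E) g)).
      2: { intros K1 K2. apply functional_extensionality; intro y. cbn -[EBmod]. apply (EB_actD HB HE). }
      2: { apply functional_extensionality; intro y. cbn -[EBmod]. apply (EB_act0 HB HE). }
      rewrite !map_map. f_equal. apply map_ext. intros p.
      apply functional_extensionality; intro y. cbn -[EBmod]. rewrite (EB_actVK HB HE). reflexivity. }
Qed.

Lemma part3 {G} {B : ringD G} (HB : is_gring B) (HBq : quadratik B) {E : modD B}
  (HE : is_rfmod (fun _ : rcar B => True) E (fun _ => True)) (HEw : weakly_cofull E)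
  {F : modD (KB E)} (HF : HFt E F) (HFc : cofull F (fun _ => True)) :
  cofull (FMBmod F) (FMB F).
Proof.
  set (Cof := fun x : F => exists s : list (F * (F -> KB E) * F),
    (forall t, In t s -> FMB F (fst (fst t)) /\ ThetaFMB F (snd (fst t)) /\ FMB F (snd t)) /\
    x = msum F (map (fun t => msmul (fst (fst t)) (snd (fst t) (snd t))) s)).
  assert (C0 : Cof (mzero F)) by (exists []; split; [intros t []|reflexivity]).
  assert (CD : forall x y, Cof x -> Cof y -> Cof (madd x y)).
  { intros x y [s1 [H1 ->]] [s2 [H2 ->]]. exists (s1 ++ s2). split.
    - intros t Ht. apply in_app_or in Ht. destruct Ht; auto.
    - unfold msum. rewrite map_app, (sum_app (M_AG HF)). auto. }
  assert (Cz : forall (z : F) phi eta, mfun F phi -> FMB F eta -> Cof (msmul z (phi eta))).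
  { intros z phi eta Hphi Heta. destruct (rep_zphi HB HBq HE HEw HF HFc z phi Hphi) as [L [HL HR]].
    exists (map (fun t => ((fst (fst t), fun x => rmul (r := KB E) (mb E (snd (fst t))) (snd t x)), eta)) L).
    split.
    - intros t Ht. apply in_map_iff in Ht. destruct Ht as [u [<- Hu]]. destruct (HL u Hu). cbn [fst snd].
      split; auto. split; auto. apply (psi_single HB HE); auto.
    - rewrite HR, map_map. reflexivity. }
  assert (Call : forall x, FMB F x -> Cof x).
  { apply FMB_ind; auto. intros xi b. destruct (HFc xi I) as [s [Hs ->]].
    rewrite (M_smul_sum_l HF) by apply (CK_mb HB HBq HE). rewrite map_map.
    unfold msum. apply (sum_closed _ _ Cof); auto. intros y Hy. apply in_map_iff in Hy. destruct Hy as [t [<- Ht]].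
    destruct (Hs t Ht) as (_&Hm&_). destruct (F_fun HB HE HF _ Hm) as (hK&_&hS&_).
    rewrite (M_smulA HF); auto. 2: apply (CK_mb HB HBq HE). rewrite <- hS. 2: apply (CK_mb HB HBq HE).
    apply Cz; auto. apply (FMB_single HB HE HF). }
  intros x Hx. destruct (Call x Hx) as [s [Hs Hx']]. exists s. split; auto.
Qed.

Lemma T_lin {G} {B : ringD G} (HB : is_gring B) {E : modD B}
  (HE : is_rfmod (fun _ : rcar B => True) E (fun _ => True))
  {F : modD (KB E)} (HF : HFt E F) (T : F -> F) :
  compact F (fun _ => True) T ->
  (forall x y, T (madd x y) = madd (T x) (T y)) /\ (forall (x : F) (k : KB E), CK E k -> T (msmul x k) = msmul (T x) k).
Proof.
  intros [s [Hs HT]]. split.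
  - intros x y. rewrite !HT by auto. unfold msum. rewrite <- (sum_map_add (M_AG HF)). f_equal.
    apply map_ext_in. intros p Hp. destruct (Hs p Hp) as [_ Hm]. destruct (F_fun HB HE HF _ Hm) as (hK&hD&_).
    rewrite hD. apply (M_smulDr HF); auto.
  - intros x k Hk. rewrite !HT by auto. rewrite (M_smul_sum_l HF), map_map by auto. f_equal.
    apply map_ext_in. intros p Hp. destruct (Hs p Hp) as [_ Hm]. destruct (F_fun HB HE HF _ Hm) as (hK&_&hS&_).
    rewrite hS, (M_smulA HF); auto.
Qed.

Lemma W_all {G} {B : ringD G} (HB : is_gring B) (HBq : quadratik B) {E : modD B}
  (HE : is_rfmod (fun _ : rcar B => True) E (fun _ => True)) (HEw : weakly_cofull E)
  {F : modD (KB E)} (HF : HFt E F) (HFc : cofull F (fun _ => True)) :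
  forall x : F, exists l : list (F * KB E), (forall t, In t l -> FMB F (fst t) /\ CK E (snd t)) /\
    x = msum F (map (fun t => msmul (fst t) (snd t)) l).
Proof.
  set (W := fun x : F => exists l : list (F * KB E), (forall t, In t l -> FMB F (fst t) /\ CK E (snd t)) /\
    x = msum F (map (fun t => msmul (fst t) (snd t)) l)).
  intros x. destruct (HFc x I) as [s [Hs ->]]. apply (sum_closed _ _ W).
  - exists []. split. intros t []. reflexivity.
  - intros a b [l1 [H1 ->]] [l2 [H2 ->]]. exists (l1 ++ l2). split.
    + intros t Ht. apply in_app_or in Ht. destruct Ht; auto.
    + unfold msum. rewrite map_app, (sum_app (M_AG HF)). auto.
  - intros y Hy. apply in_map_iff in Hy. destruct Hy as [t [<- Ht]].
    destruct (Hs t Ht) as (_&Hm&_).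
    destruct (rep_zphi HB HBq HE HEw HF HFc (fst (fst t)) _ Hm) as [L [HL HR]].
    exists (map (fun u => (fst (fst u), rmul (r := KB E) (mb E (snd (fst u))) (snd u (snd t)))) L). split.
    + intros v Hv. apply in_map_iff in Hv. destruct Hv as [u [<- Hu]]. destruct (HL u Hu) as [h1 h2]. cbn [fst snd].
      split; auto. apply (CK_comp HB HE (mb E (snd (fst u))) (snd u (snd t))). apply (CK_mb HB HBq HE).
      apply (F_fun HB HE HF _ h2).
    + rewrite HR, map_map. reflexivity.
Qed.

Lemma part5 {G} {B : ringD G} (HB : is_gring B) (HBq : quadratik B) {E : modD B}
  (HE : is_rfmod (fun _ : rcar B => True) E (fun _ => True)) (HEw : weakly_cofull E)
  {F : modD (KB E)} (HF : HFt E F) (HFc : cofull F (fun _ => True)) :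
  forall T T' : mcar F -> mcar F,
     compact F (fun _ => True) T -> compact F (fun _ => True) T' ->
     (forall x, FMB F x -> T x = T' x) -> T = T'.
Proof.
  intros T T' HT HT' Heq. apply functional_extensionality; intro x.
  destruct (T_lin HB HE HF T HT) as [TD TS]. destruct (T_lin HB HE HF T' HT') as [TD' TS'].
  assert (T0 : T (mzero F) = mzero F) by (apply (hom_zero (@madd _ _ F) _ (M_AG HF)); auto; apply (ag_0l (M_AG HF))).
  assert (T0' : T' (mzero F) = mzero F) by (apply (hom_zero (@madd _ _ F) _ (M_AG HF)); auto; apply (ag_0l (M_AG HF))).
  destruct (W_all HB HBq HE HEw HF HFc x) as [l [Hl ->]]. unfold msum.
  rewrite (hom_sum _ _ _ _ T TD T0), (hom_sum _ _ _ _ T' TD' T0'), !map_map. f_equal.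
  apply map_ext_in. intros t Ht. destruct (Hl t Ht). rewrite TS, TS', Heq; auto.
Qed.

Lemma part6 {G} {B : ringD G} (HB : is_gring B) (HBq : quadratik B) {E : modD B}
  (HE : is_rfmod (fun _ : rcar B => True) E (fun _ => True))
  {F : modD (KB E)} (HF : HFt E F) :
  forall U : mcar F -> mcar F, compact (FMBmod F) (FMB F) U ->
     exists T : mcar F -> mcar F, compact F (fun _ => True) T /\
       (forall x, FMB F x -> T x = U x).
Proof.
  intros U [s [Hs HU]].
  assert (Hind : forall s' : list (F * (F -> KB E)), (forall p, In p s' -> FMB F (fst p) /\ ThetaFMB F (snd p)) ->
    exists T : F -> F, compact F (fun _ => True) T /\
      forall x, FMB F x -> T x = msum F (map (fun p => msmul (fst p) (snd p x)) s')).
  { induction s' as [|p s' IH]; intros Hs'.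
    - exists (fun _ => mzero F). split. exists []. split. intros t []. intros; reflexivity. intros; reflexivity.
    - destruct IH as [T1 [C1 E1]]. intros; apply Hs'; right; auto.
      destruct (Hs' p (or_introl eq_refl)) as [Hxi [sp [Hsp Hp]]].
      set (L := map (fun q => (fst p, fun x => rmul (r := KB E) (fst q) (snd q x))) sp).
      destruct C1 as [s1 [Hs1 HT1]].
      exists (fun x => msum F (map (fun t => msmul (fst t) (snd t x)) (L ++ s1))). split.
      + exists (L ++ s1). split; auto. intros t Ht. apply in_app_or in Ht. destruct Ht as [Ht|Ht]; auto.
        unfold L in Ht. apply in_map_iff in Ht. destruct Ht as [q [<- Hq]]. destruct (Hsp q Hq) as [HM Hm].
        split; auto. apply (M_funM HF); auto. apply (MB_CK HB HBq HE); auto.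
      + intros x Hx. unfold msum. rewrite map_app, (sum_app (M_AG HF)). cbn [map fold_right].
        f_equal. 2: { transitivity (T1 x). symmetry; apply HT1; auto. apply E1; auto. }
        rewrite Hp by auto. rewrite (F_smul_sum_r HB HE HF). unfold L. rewrite !map_map. reflexivity.
        intros K HK. apply in_map_iff in HK. destruct HK as [q [<- Hq]]. destruct (Hsp q Hq) as [HM Hm].
        apply (CK_comp HB HE (fst q) (snd q x)). apply (MB_CK HB HBq HE); auto. apply (F_fun HB HE HF _ Hm). }
  destruct (Hind s Hs) as [T [CT ET]]. exists T. split; auto. intros x Hx. rewrite ET, HU; auto.
Qed.
Theorem proposition8p1 (G : group) (B : ringD G) (HB : is_gring B) (HBq : quadratik B)
  (E : modD B) (HE : is_rfmod (fun _ : rcar B => True) E (fun _ => True))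
  (HEw : weakly_cofull E)
  (F : modD (KB E))
  (HF : is_rfmod (R := KB E) (compact (EBmod E) (fun _ => True)) F (fun _ => True))
  (HFc : cofull F (fun _ => True)) :
  (* M_B is contained in K_B(E (+) B) *)
  (forall b : rcar B, compact (EBmod E) (fun _ => True) (mb E b)) /\
  (* F M_B is a right functional module over M_B ~ B *)
  is_rfmod (R := KB E) (MB E) (FMBmod F) (FMB F) /\
  (* F M_B is cofull *)
  cofull (FMBmod F) (FMB F) /\
  (* pi(T) = T|_{F M_B} is a well-defined map K(F) -> K_B(F M_B) ... *)
  (forall T : mcar F -> mcar F, compact F (fun _ => True) T ->
     (forall x, FMB F x -> FMB F (T x)) /\ compact (FMBmod F) (FMB F) T) /\
  (* ... which is injective ... *)
  (forall T T' : mcar F -> mcar F,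
     compact F (fun _ => True) T -> compact F (fun _ => True) T' ->
     (forall x, FMB F x -> T x = T' x) -> T = T') /\
  (* ... and surjective *)
  (forall U : mcar F -> mcar F, compact (FMBmod F) (FMB F) U ->
     exists T : mcar F -> mcar F, compact F (fun _ => True) T /\
       (forall x, FMB F x -> T x = U x)).
Proof.
Proof.
  split. { intros b. apply (CK_mb HB HBq HE). }
  split. { apply (part2 HB HBq HE HF). }
  split. { apply (part3 HB HBq HE HEw HF HFc). }
  split. { intros T HT. pose proof (rep_compact HB HBq HE HEw HF HFc T HT) as R. split.
           apply (RepF_FMB HB HBq HE HF); auto. apply (RepF_compact HB HE); auto. }
  split. { apply (part5 HB HBq HE HEw HF HFc). }
  apply (part6 HB HBq HE HF).
Qed.
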